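(* Let $n\ge1$ and $I,J\subseteq[n-1]$. Then (a) $M_{\mathrm{comp}(I)}=\sum_{J\subseteq[n-1]:\,I\cup J=[n-1]}(-\nu)^{|J\setminus I|}(\nu-1)^{|I\cap J|}\Pi(\nu)_{\mathrm{comp}(J)}$; (b) $\Pi(\nu)_{\mathrm{comp}(J)}=\left(\frac{1}{1-\nu}\right)^{|J|}\sum_{I\subseteq[n-1]:\,I\cap J=\emptyset}\left(\frac{\nu-1}{\nu}\right)^{(n-1)-|I|}M_{\mathrm{comp}(I)}$.
   Context: Fix an integer $\nu>1$; $C_\nu$ is the additive cyclic group of order $\nu$; $Q_n(\nu)=\bigoplus_{i\in[n-1]}C_\nu$. $\psi_\nu(0)=1$, $\psi_\nu(g)=-1/(\nu-1)$ for $g\ne0$. For $I\subseteq[n-1]$, $\dot\chi^I(\nu)(\mathbf g)=\prod_{i\in[n-1]\setminus I}\psi_\nu(g_i)$, and $\kappa_I(\nu)$ is the indicator function of $\{\mathbf g:\{i:g_i\ne0\}=I\}$. $\mathrm{scf}(\mathcal N_n(\nu))$ is the span of the $\kappa_I(\nu)$ (also spanned by the $\dot\chi^I(\nu)$). $\mathrm{comp}(\{s_1<\dots<s_i\})=(s_1,s_2-s_1,\dots,n-s_i)$; $M_\alpha$ are the monomial quasisymmetric functions and $L_{\mathrm{comp}(I)}=\sum_{I\subseteq J\subseteq[n-1]}M_{\mathrm{comp}(J)}$. $\mathrm{ch}^n_\nu:\mathrm{scf}(\mathcal N_n(\nu))\to\mathsf{QSym}_n$ is the linear map $\dot\chi^I(\nu)\mapsto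 L_{\mathrm{comp}(I)}$, and $\Pi(\nu)_{\mathrm{comp}(I)}:=\mathrm{ch}^n_\nu\big(\kappa_I(\nu)/(\nu-1)^{|I|}\big)$. *)

(* Defs.v *)
From HB Require Import structures.
From mathcomp Require Import all_boot all_order all_algebra.
From mathcomp Require Import mpoly.
From Stdlib Require Import ClassicalEpsilon.



Unset Printing Implicit Defensive.

Import Order.TTheory GRing.Theory Num.Theory.
Local Open Scope ring_scope.

(* Index set [n-1] = {1,...,n-1} is modelled by 'I_(n.-1): ordinal i stands
   for the integer i+1.  C_nu is modelled by 'I_nu (only the test g == 0 is
   used); Q_n(nu) = (C_nu)^[n-1] is {ffun 'I_(n.-1) -> 'I_nu}). *)
Notation Qn nu n := ({ffun 'I_(n.-1) -> 'I_nu}).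

Section Defs.
Variable R : numFieldType.

Definition psi (nu : nat) (g : 'I_nu) : R :=
  if val g == 0%N then 1 else - (nu%:R - 1)^-1.

Definition chidot (nu n : nat) (I : {set 'I_(n.-1)}) : {ffun Qn nu n -> R} :=
  [ffun g : Qn nu n => \prod_(i in ~: I) psi nu (g i)].

Definition kappa (nu n : nat) (I : {set 'I_(n.-1)}) : {ffun Qn nu n -> R} :=
  [ffun g : Qn nu n => ([set i | val (g i) != 0%N] == I)%:R].

(* comp({s_1<...<s_i}) = (s_1, s_2-s_1, ..., n-s_i) *)
Definition compos (n : nat) (I : {set 'I_(n.-1)}) : seq nat :=
  pairmap (fun a b => b - a)%N 0%N
    (rcons [seq (val i).+1 | i <- enum I] n).

(* Monomial quasisymmetric function M_alpha, realised in the n variables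
   x_0,...,x_{n-1}:  sum over i_1 < ... < i_k of x_{i_1}^{a_1}...x_{i_k}^{a_k}. *)
Definition Mqs (n : nat) (alpha : seq nat) : {mpoly R[n]} :=
  \sum_(f : {ffun 'I_(size alpha) -> 'I_n} |
          [forall i : 'I_(size alpha), forall j : 'I_(size alpha), (val i < val j)%N ==> (val (f i) < val (f j))%N])
    \prod_(j < size alpha) 'X_(f j) ^+ nth 0%N alpha j.

Definition Lqs (n : nat) (I : {set 'I_(n.-1)}) : {mpoly R[n]} :=
  \sum_(J : {set 'I_(n.-1)} | I \subset J) Mqs n (compos n J).

(* ch^n_nu : scf(N_n(nu)) -> QSym_n, the linear map chidot^I |-> L_comp(I):
   ch f = sum_I a_I L_comp(I), where (a_I) are the (unique) coefficients with
   f = sum_I a_I chidot^I. *)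
Definition chcoef (nu n : nat) (f : {ffun Qn nu n -> R}) :
  {set 'I_(n.-1)} -> R :=
  epsilon (inhabits (fun _ => 0))
    (fun a : {set 'I_(n.-1)} -> R =>
       forall g : Qn nu n, f g = \sum_(J : {set 'I_(n.-1)}) a J * chidot nu n J g).

Definition ch (nu n : nat) (f : {ffun Qn nu n -> R}) : {mpoly R[n]} :=
  \sum_(I : {set 'I_(n.-1)}) chcoef nu n f I *: Lqs n I.

Definition Pi (nu n : nat) (J : {set 'I_(n.-1)}) : {mpoly R[n]} :=
  ch nu n [ffun g : Qn nu n => (nu%:R - 1) ^- #|J| * kappa nu n J g].

End Defs.

(* Main.v *)
Require Import Defs.
From HB Require Import structures.
From mathcomp Require Import all_boot all_order all_algebra.
From mathcomp Require Import mpoly.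
From mathcomp Require Import ring.
From Stdlib Require Import ClassicalEpsilon.
Import Order.TTheory GRing.Theory Num.Theory.
Local Open Scope ring_scope.

Lemma sumsetP (R : numFieldType) (T : finType) (F : T -> bool -> R) :
  \sum_(S : {set T}) \prod_(i : T) F i (i \in S) =
  \prod_(i : T) (F i true + F i false).
Proof.
transitivity (\prod_(i : T) \sum_(b : bool) F i b); last first.
  by apply: eq_bigr => i _; rewrite big_bool.
rewrite bigA_distr_bigA /=.
rewrite (reindex (fun f : {ffun T -> bool} => [set i | f i])) /=.
  by apply: eq_bigr => f _; apply: eq_bigr => i _; rewrite inE.
exists (fun S : {set T} => [ffun i => i \in S]) => [f _|S _].
  by apply/ffunP => i; rewrite ffunE inE.
by apply/setP => i; rewrite inE ffunE.
Qed.

Lemma expr_card (R : numFieldType) (T : finType) (A : {set T}) (x : R) :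
  x ^+ #|A| = \prod_i (if i \in A then x else 1).
Proof. by rewrite -big_mkcond /= prodr_const. Qed.

Lemma natr_eqset (R : numFieldType) (T : finType) (A B : {set T}) :
  ((A == B)%:R : R) = \prod_i ((i \in A) == (i \in B))%:R.
Proof.
case: (boolP (A == B)) => [/eqP ->|nAB].
  by rewrite big1 // => i _; rewrite eqxx.
case: (boolP [exists i, (i \in A) != (i \in B)]) => [/existsP [i Hi]|].
  by rewrite (bigD1 i) //= (negbTE Hi) mul0r.
rewrite negb_exists => /forallP H; case/negP: nAB; apply/eqP/setP => j.
by have := H j; rewrite negbK => /eqP.
Qed.

Lemma natr_sub (R : numFieldType) (T : finType) (A B : {set T}) :
  ((A \subset B)%:R : R) = \prod_i ((i \in A) ==> (i \in B))%:R.
Proof.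
case: (boolP (A \subset B)) => [/subsetP H|nAB].
  by rewrite big1 // => i _; case: (boolP (i \in A)) => // /H ->.
case: (boolP [exists i, ~~ ((i \in A) ==> (i \in B))]) => [/existsP [i Hi]|].
  by rewrite (bigD1 i) //= (negbTE Hi) mul0r.
rewrite negb_exists => /forallP H; case/negP: nAB; apply/subsetP => j.
by have := H j; rewrite negbK => /implyP.
Qed.

Definition Wt (R : numFieldType) (nu : nat) (k s : bool) : R :=
  let N : R := nu%:R in
  if k then (if s then (N-1)/N else 1/N) else (if s then -(N-1)/N else (N-1)/N).

Definition alp (R : numFieldType) (nu : nat) (j k : bool) : R :=
  let N : R := nu%:R in
  if k then 1/N else (if j then -1/N else (N-1)/N).

Definition gam (R : numFieldType) (nu : nat) (j l : bool) : R :=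
  let N : R := nu%:R in
  if j then (if l then 0 else -1/N) else (if l then 1 else (N-1)/N).

Lemma nz (R : numFieldType) nu : (1 < nu)%N ->
  [/\ (nu%:R : R) != 0, (nu%:R : R) - 1 != 0 & 1 - (nu%:R : R) != 0].
Proof.
move=> hnu.
have h1 : (nu%:R : R) - 1 != 0.
  rewrite subr_eq0 pnatr_eq1; apply/eqP => E; by rewrite E in hnu.
split => //; first by rewrite pnatr_eq0 -lt0n (ltnW hnu).
by rewrite -opprB oppr_eq0.
Qed.

Lemma chidot_prod (R : numFieldType) nu n K (g : Qn nu n) :
  chidot R nu n K g = \prod_i (if i \in K then 1 else psi R nu (g i)).
Proof.
rewrite /chidot ffunE big_mkcond; apply: eq_bigr => i _; rewrite inE.
by case: (i \in K).
Qed.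

Lemma kappa_prod (R : numFieldType) nu n J (g : Qn nu n) :
  kappa R nu n J g = \prod_i ((val (g i) != 0%N) == (i \in J))%:R.
Proof.
by rewrite /kappa ffunE natr_eqset; apply: eq_bigr => i _; rewrite inE.
Qed.

Lemma coef_unique (R : numFieldType) nu n (hnu : (1 < nu)%N)
  (a b : {set 'I_(n.-1)} -> R) :
  (forall g : Qn nu n, \sum_J a J * chidot R nu n J g = \sum_J b J * chidot R nu n J g) ->
  a =1 b.
Proof.
move=> H K.
have [hN hN1 _] := nz R nu hnu.
pose one : 'I_nu := Ordinal hnu.
pose zero : 'I_nu := Ordinal (ltnW hnu).
pose gS (S : {set 'I_(n.-1)}) : Qn nu n := [ffun i => if i \in S then one else zero].
pose E (c : {set 'I_(n.-1)} -> R) :=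
  \sum_(S : {set 'I_(n.-1)}) (\prod_i Wt R nu (i \in K) (i \in S)) * \sum_J c J * chidot R nu n J (gS S).
suff HE : forall c, E c = c K.
  by rewrite -HE -[b K]HE /E; apply: eq_bigr => S _; rewrite H.
have inner : forall J, \sum_(S : {set 'I_(n.-1)}) (\prod_i Wt R nu (i \in K) (i \in S)) * chidot R nu n J (gS S)
     = (J == K)%:R.
  move=> J.
  pose F i s := Wt R nu (i \in K) s *
       (if i \in J then 1 else psi R nu (if s then one else zero)).
  transitivity (\sum_(S : {set 'I_(n.-1)}) \prod_i F i (i \in S)).
    apply: eq_bigr => S _; rewrite chidot_prod -big_split; apply: eq_bigr => i _.
    by rewrite /F ffunE.
  rewrite sumsetP natr_eqset; apply: eq_bigr => i _.
  rewrite /F /Wt /psi /=.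
  case: (i \in K); case: (i \in J) => /=; field; by rewrite ?hN ?hN1.
move=> c; rewrite /E.
under eq_bigr do rewrite big_distrr.
rewrite exchange_big /=.
transitivity (\sum_J c J * (J == K)%:R).
  apply: eq_bigr => J _; rewrite -inner big_distrr; apply: eq_bigr => S _.
  by rewrite mulrCA.
rewrite (bigD1 K) //= eqxx mulr1 big1 ?addr0 // => J /negbTE ->.
by rewrite mulr0.
Qed.

Lemma lin (R : numFieldType) n (c : {set 'I_(n.-1)} -> R) :
  \sum_(K : {set 'I_(n.-1)}) c K *: Lqs R n K =
  \sum_(L : {set 'I_(n.-1)}) (\sum_(K : {set 'I_(n.-1)}) (K \subset L)%:R * c K) *: Mqs R n (compos n L).
Proof.
transitivity (\sum_(K : {set 'I_(n.-1)}) \sum_(L : {set 'I_(n.-1)}) ((K \subset L)%:R * c K) *: Mqs R n (compos n L)).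
  apply: eq_bigr => K _; rewrite /Lqs scaler_sumr big_mkcond /=.
  apply: eq_bigr => L _; case: (K \subset L).
    by rewrite mul1r.
  by rewrite mul0r scale0r.
rewrite exchange_big; apply: eq_bigr => L _; by rewrite scaler_suml.
Qed.

Lemma swap2 (R : numFieldType) n (P : pred {set 'I_(n.-1)})
  (c : {set 'I_(n.-1)} -> R) (d : {set 'I_(n.-1)} -> {set 'I_(n.-1)} -> R) :
  \sum_(J | P J) c J *: \sum_(L : {set 'I_(n.-1)}) d J L *: Mqs R n (compos n L) =
  \sum_(L : {set 'I_(n.-1)}) (\sum_(J : {set 'I_(n.-1)}) ((P J)%:R * c J * d J L)) *: Mqs R n (compos n L).
Proof.
transitivity (\sum_(J : {set 'I_(n.-1)}) \sum_(L : {set 'I_(n.-1)}) ((P J)%:R * c J * d J L) *: Mqs R n (compos n L)).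
  rewrite big_mkcond; apply: eq_bigr => J _; case: (P J).
    by rewrite scaler_sumr; apply: eq_bigr => L _; rewrite mul1r scalerA.
  by rewrite big1 // => L _; rewrite !mul0r scale0r.
rewrite exchange_big; apply: eq_bigr => L _; by rewrite scaler_suml.
Qed.

Lemma PiE (R : numFieldType) nu n (hnu : (1 < nu)%N) J :
  Pi R nu n J = \sum_(L : {set 'I_(n.-1)}) (\prod_i gam R nu (i \in J) (i \in L)) *: Mqs R n (compos n L).
Proof.
have [hN hN1 _] := nz R nu hnu.
rewrite /Pi.
set f := [ffun g => _].
pose a (K : {set 'I_(n.-1)}) := \prod_i alp R nu (i \in J) (i \in K).
have Hex : forall g, f g = \sum_(K : {set 'I_(n.-1)}) a K * chidot R nu n K g.
  move=> g; rewrite /f ffunE.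
  pose F i k := alp R nu (i \in J) k * (if k then 1 else psi R nu (g i)).
  transitivity (\sum_(K : {set 'I_(n.-1)}) \prod_i F i (i \in K)); last first.
    apply: eq_bigr => K _; rewrite chidot_prod -big_split.
    by apply: eq_bigr => i _; rewrite /F.
  rewrite sumsetP -exprVn expr_card kappa_prod -big_split.
  apply: eq_bigr => i _; rewrite /F /alp /psi /=.
  case: (i \in J); case: (val (g i) == 0%N) => /=; field; by rewrite ?hN ?hN1.
have Hc : forall g, f g = \sum_(K : {set 'I_(n.-1)}) chcoef R nu n f K * chidot R nu n K g.
  exact: (epsilon_spec (inhabits (fun _ => 0))
     (fun a => forall g, f g = \sum_(K : {set 'I_(n.-1)}) a K * chidot R nu n K g) (ex_intro _ a Hex)).
have Ha : forall K, chcoef R nu n f K = a K.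
  by apply: (@coef_unique R nu n hnu) => g; rewrite -Hc -Hex.
rewrite /ch.
under eq_bigr do rewrite Ha.
rewrite lin; apply: eq_bigr => L _; congr (_ *: _).
pose F i k := ((k ==> (i \in L)))%:R * alp R nu (i \in J) k.
transitivity (\sum_(K : {set 'I_(n.-1)}) \prod_i F i (i \in K)).
  by apply: eq_bigr => K _; rewrite natr_sub -big_split.
rewrite sumsetP; apply: eq_bigr => i _; rewrite /F /alp /gam.
case: (i \in J); case: (i \in L) => /=; field; by rewrite ?hN ?hN1.
Qed.

Theorem lemma4p4 (R : numFieldType) (nu n : nat) :
  (1 < nu)%N -> (1 <= n)%N ->
  (forall I : {set 'I_(n.-1)},
     Mqs R n (compos n I) =
     \sum_(J : {set 'I_(n.-1)} | I :|: J == setT)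
        ((- (nu%:R : R)) ^+ #|J :\: I| * ((nu%:R : R) - 1) ^+ #|I :&: J|)
          *: Pi R nu n J)
  /\
  (forall J : {set 'I_(n.-1)},
     Pi R nu n J =
     (1 / (1 - (nu%:R : R))) ^+ #|J| *:
       \sum_(I : {set 'I_(n.-1)} | I :&: J == set0)
          (((nu%:R : R) - 1) / nu%:R) ^+ (n.-1 - #|I|) *: Mqs R n (compos n I)).
Proof.
move=> hnu _.
have [hN hN1 h1N] := nz R nu hnu.
split.
  move=> I.
  under eq_bigr => J _ do rewrite (PiE R nu n hnu J).
  rewrite swap2.
  transitivity (\sum_(L : {set 'I_(n.-1)}) (L == I)%:R *: Mqs R n (compos n L)).
    rewrite (bigD1 I) //= eqxx mulr1n scale1r big1 ?addr0 // => L /negbTE ->.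
    by rewrite mulr0n scale0r.
  apply: eq_bigr => L _; congr (_ *: _).
  pose F i j := (((i \in I) || j) == true)%:R *
     ((if j && (i \notin I) then - (nu%:R : R) else 1) *
      (if (i \in I) && j then (nu%:R : R) - 1 else 1)) * gam R nu j (i \in L).
  symmetry.
  transitivity (\sum_(J : {set 'I_(n.-1)}) \prod_i F i (i \in J)).
    apply: eq_bigr => J _; rewrite natr_eqset !expr_card -!big_split.
    apply: eq_bigr => i _; rewrite /F !inE.
    by case: (i \in I); case: (i \in J).
  rewrite sumsetP natr_eqset; apply: eq_bigr => i _; rewrite /F /gam.
  case: (i \in I); case: (i \in L) => /=; field; by rewrite ?hN ?hN1.
move=> J.
rewrite PiE // [in RHS]big_mkcond scaler_sumr; apply: eq_bigr => L _.
case: ifP => HL.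
  rewrite scalerA; congr (_ *: _).
  have hc : (#|L| + #|~: L| = n.-1)%N by rewrite cardsC card_ord.
  have Hd : forall i, i \in L -> i \in J -> False.
    move=> i iL iJ; move/eqP/setP: HL => HL; have := HL i.
    by rewrite !inE iL iJ.
  have -> : (n.-1 - #|L| = #|~: L|)%N by rewrite -{1}hc addKn.
  rewrite !expr_card -big_split; apply: eq_bigr => i _.
  rewrite /gam inE.
  case iL: (i \in L); case iJ: (i \in J) => /=; first by case: (Hd i).
  1-3: field; by rewrite ?hN ?hN1 ?h1N.
case/set0Pn: (negbT HL) => i; rewrite inE => /andP [iL iJ].
by rewrite scaler0 (bigD1 i) // iL iJ /gam /= mul0r scale0r.
Qed.
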